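(* Let $T$ be a balanced tree with a proper 2-coloring $\chi:V\to\{\mathcal{R},\mathcal{B}\}$ in which all leaves are blue. If there is a support vertex $s\in V_1$ with $|N(s)\cap V_2|\ge 2$, then $T$ has two minimal RD-sets of different sizes, and hence $T$ is mixed.
   Context: $N(v)=\{u:uv\in E\}$, $N(D)=\bigcup_{v\in D}N(v)$. A leaf is a vertex of degree 1; a support vertex is a vertex adjacent to a leaf. The height of a vertex is its minimum distance to a leaf; $V_k$ is the set of vertices of height $k$; $T$ is balanced if no two adjacent vertices have the same height. An RD-set is $D\subseteq V$ with $N(D)=\chi^{-1}(\mathcal{R})$, minimal if no proper subset is an RD-set. A TD-set is $D$ with $N(D)=V$, minimal if no proper subset is a TD-set; $T$ is mixed if not all minimal TD-sets have the same size. *)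

(* Defs.v *)
From mathcomp Require Import all_boot.
Set Implicit Arguments. Unset Strict Implicit. Unset Printing Implicit Defensive.

(* Colours: chi : T -> bool with
   chi v = true meaning v is Red (R) and false meaning Blue (B). *)

Section Graphs.
Variables (T : finType) (e : rel T).

Definition simple_graph := symmetric e /\ irreflexive e.

(* the set of (ordered) adjacent pairs: twice the number of edges *)
Definition darts : {set T * T} := [set p | e p.1 p.2].

Definition is_tree :=
  [/\ simple_graph, 0 < #|T|, (forall x y, connect e x y)
    & #|darts| = 2 * (#|T| - 1)].

Definition nbhd (v : T) : {set T} := [set u | e v u].
Definition nbhdS (D : {set T}) : {set T} := \bigcup_(v in D) nbhd v.

Definition leaf (v : T) := #|nbhd v| == 1.
Definition support_vertex (v : T) := [exists l, leaf l && e v l].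

Definition walkn (n : nat) (x y : T) :=
  [exists p : n.-tuple T, path e x p && (last x p == y)].

(* graph distance (= #|T| if unreachable) *)
Definition dist (x y : T) : nat := find (fun n => walkn n x y) (iota 0 #|T|).

Definition height (v : T) : nat := \big[minn/#|T|]_(l | leaf l) dist v l.

Definition Vk (k : nat) : {set T} := [set v | height v == k].

Definition balanced := forall u v, e u v -> height u != height v.

Definition proper_2coloring (chi : T -> bool) := forall u v, e u v -> chi u != chi v.

Definition is_RD (chi : T -> bool) (D : {set T}) := nbhdS D == [set v | chi v].
Definition minimal_RD (chi : T -> bool) (D : {set T}) := minset (is_RD chi) D.

Definition is_TD (D : {set T}) := nbhdS D == setT.
Definition minimal_TD (D : {set T}) := minset is_TD D.

Definition mixed :=
  exists D1 D2, [/\ minimal_TD D1, minimal_TD D2 & #|D1| != #|D2|].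

End Graphs.

(* Main.v *)
Require Import Defs.
From mathcomp Require Import all_boot zify.
Set Implicit Arguments. Unset Strict Implicit. Unset Printing Implicit Defensive.

Lemma walknP (T : finType) (f : rel T) n x y :
  reflect (exists p : seq T, [/\ size p = n, path f x p & last x p = y]) (walkn f n x y).
Proof.
apply: (iffP existsP) => [[p /andP[pp /eqP lp]] | [p [sp pp lp]]].
  by exists (val p); rewrite size_tuple.
have sp' : size p == n by rewrite sp.
by exists (Tuple sp'); rewrite /= pp lp eqxx.
Qed.

Lemma dist_le (T : finType) (f : rel T) n x y :
  n < #|T| -> walkn f n x y -> dist f x y <= n.
Proof.
move=> nT w; rewrite /dist; case: leqP => // lt.
have := before_find 0 lt; rewrite nth_iota // add0n w //.
Qed.

Lemma dist_walk (T : finType) (f : rel T) x y :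
  connect f x y -> dist f x y < #|T| /\ walkn f (dist f x y) x y.
Proof.
case/connectP => p pp ->; case: (shortenP pp) => p' pp' up' _.
have szp : size p' < #|T|.
  move/card_uniqP: up' => /= <-; exact: max_card.
have hs : has (fun n => walkn f n x (last x p')) (iota 0 #|T|).
  apply/hasP; exists (size p'); first by rewrite mem_iota.
  by apply/walknP; exists p'.
have := nth_find 0 hs; rewrite has_find size_iota in hs.
by rewrite nth_iota // add0n /dist => ->; split.
Qed.

Definition darts_lb_par (T : finType) (f : rel T) (r : T) (x : T) :=
  odflt x [pick y | f x y && (dist f y r < dist f x r)].

Lemma darts_lb (T : finType) (f : rel T) (r : T) :
  symmetric f -> (forall x y, connect f x y) -> 2 * (#|T| - 1) <= #|darts f|.
Proof.
move=> fsym conn.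
pose d x := dist f x r.
have parex : forall x, x != r -> exists y, f x y && (d y < d x).
  move=> x xr; have [lt w] := dist_walk (conn x r).
  case/walknP: w => p [sp pp lp].
  case: p sp pp lp => [|y p] sp pp lp; first by rewrite /= in lp; rewrite lp eqxx in xr.
  move: pp => /= /andP[fxy pp]; exists y; rewrite fxy /=.
  have := @dist_le _ f (size p) y r; rewrite /d -sp /=.
  move: lt; rewrite /d -sp => lt; have lt' : size p < #|T| by apply: ltnW.
  by move=> /(_ lt'); apply; apply/walknP; exists p.
pose par := darts_lb_par f r.
have parP : forall x, x != r -> f x (par x) && (d (par x) < d x).
  move=> x xr; rewrite /par /darts_lb_par; case: pickP => [y //|none].
  by have [y Hy] := parex x xr; move: (none y); rewrite Hy.
pose U1 := [set (x, par x) | x in [set~ r]].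
pose U2 := [set (par x, x) | x in [set~ r]].
have c1 : #|U1| = #|T|.-1 by rewrite card_imset ?cardsC1 // => x y [].
have c2 : #|U2| = #|T|.-1 by rewrite card_imset ?cardsC1 // => x y [].
have I0 : U1 :&: U2 = set0.
  apply/setP => p; rewrite inE [p \in set0]inE; apply/negP => /andP[].
  case/imsetP => x; rewrite !inE => xr ->; case/imsetP => y; rewrite !inE => yr [e1 e2].
  have := parP x xr; have := parP y yr; rewrite -e1 e2 => /andP[_ h1] /andP[_ h2].
  by move: (ltn_trans h1 h2); rewrite ltnn.
have sub : U1 :|: U2 \subset darts f.
  apply/subsetP => p /setUP[] /imsetP[x]; rewrite !inE => xr -> /=;
    have /andP[h _] := parP x xr => //; by rewrite fsym.
have := subset_leq_card sub; rewrite cardsU I0 cards0 subn0 c1 c2 subn1.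
by rewrite mul2n -addnn.
Qed.

Definition remEdge (T : finType) (f : rel T) u v : rel T :=
  [rel x y | f x y && ~~ (((x == u) && (y == v)) || ((x == v) && (y == u)))].

Lemma bridge (T : finType) (e : rel T) u v :
  is_tree e -> e u v -> ~~ connect (remEdge e u v) u v.
Proof.
case=> [[esym eirr] n0 conn cnt] euv; apply/negP => C.
have rsym : symmetric (remEdge e u v).
  move=> x y; rewrite /remEdge /= esym.
  by case: (x == u); case: (y == v); case: (x == v); case: (y == u).
have rconn : forall x y, connect (remEdge e u v) x y.
  move=> x y; apply: (connect_sub _ (conn x y)) => z w ezw.
  case: (boolP (((z == u) && (w == v)) || ((z == v) && (w == u)))) =>
     [/orP[/andP[/eqP-> /eqP->] | /andP[/eqP -> /eqP ->]] | H].
  - exact C.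
  - by rewrite (sym_connect_sym rsym).
  - by apply: connect1; rewrite /remEdge /= ezw H.
have := darts_lb u rsym rconn.
have uv : u != v by apply/eqP => Euv; move: euv; rewrite Euv eirr.
have -> : darts (remEdge e u v) = darts e :\ (u, v) :\ (v, u).
  apply/setP => -[x y]; rewrite !inE /remEdge /= !xpair_eqE.
  by case: (x == u); case: (y == v); case: (x == v); case: (y == u); case: (e x y).
move: cnt; rewrite (cardsD1 (u, v) (darts e)) (cardsD1 (v, u) (darts e :\ (u, v))) !inE /= euv esym euv.
rewrite !xpair_eqE (negbTE uv) /=.
rewrite andbF /= add1n; move=> H1 H2; rewrite -H1 in H2; move: H2.
by rewrite add1n ltnNge leqnSn.
Qed.

Lemma nbhdSP (T : finType) (e : rel T) (D : {set T}) v :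
  reflect (exists2 w, w \in D & e w v) (v \in nbhdS e D).
Proof.
rewrite /nbhdS; apply: (iffP bigcupP) => [[w wD]|[w wD ewv]].
  by rewrite inE => h; exists w.
by exists w; rewrite ?inE.
Qed.

Lemma cover_min (T : finType) (e : rel T) (W Q : {set T}) :
  (forall r, r \in Q -> exists2 w, w \in W & e w r) ->
  exists D : {set T}, [/\ D \subset W,
    (forall r, r \in Q -> exists2 w, w \in D & e w r) &
    (forall v, v \in D -> exists2 r, r \in Q &
        (e v r /\ forall w, w \in D -> e w r -> w = v))].
Proof.
move=> covW.
pose P := fun D : {set T} => [forall r in Q, exists w in D, e w r].
have PW : P W.
  apply/forall_inP => r rQ; have [w wW ewr] := covW r rQ.
  by apply/exists_inP; exists w.
have [D minD sDW] := minset_exists PW.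
have PD := minsetp minD.
exists D; split => //.
  move=> r rQ; have := forall_inP PD r rQ; case/exists_inP => w wD ewr.
  by exists w.
move=> v vD.
have nP : ~~ P (D :\ v).
  apply/negP => H; have := minsetinf minD H (subsetDl D [set v]).
  by move/setP/(_ v); rewrite !inE eqxx vD.
case/forall_inPn: nP => r rQ /exists_inPn Hno.
have := forall_inP PD r rQ; case/exists_inP => w wD ewr.
have wv : w = v.
  case: (eqVneq w v) => // wv; have := Hno w; rewrite !inE wv wD ewr; by move=> /(_ isT).
exists r => //; split; first by rewrite -wv.
move=> w' w'D ew'r; case: (eqVneq w' v) => // w'v.
by have := Hno w'; rewrite !inE w'v w'D ew'r; move=> /(_ isT).
Qed.

Lemma bigmin_seq_le (I : eqType) (s : seq I) (F : I -> nat) x0 j :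
  j \in s -> \big[minn/x0]_(i <- s) F i <= F j.
Proof.
elim: s => [|y s IH] //; rewrite big_cons inE => /orP[/eqP->|js].
  exact: geq_minl.
exact: leq_trans (geq_minr _ _) (IH js).
Qed.

Lemma height_leaf (T : finType) (e : rel T) v :
  0 < #|T| -> leaf e v -> height e v = 0.
Proof.
move=> n0 lv; apply/eqP; rewrite -leqn0.
have d0 : dist e v v = 0.
  rewrite /dist; move: n0; case: #|T| => [|n] // _ /=.
  suff -> : walkn e 0 v v by [].
  by apply/walknP; exists [::].
rewrite /height -big_filter -d0; apply: bigmin_seq_le.
by rewrite mem_filter lv mem_index_enum.
Qed.

Lemma cardU0 (T : finType) (A B : {set T}) :
  (forall v, v \in A -> v \in B -> False) -> #|A :|: B| = #|A| + #|B|.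
Proof.
move=> H; rewrite cardsU; suff -> : A :&: B = set0 by rewrite cards0 subn0.
apply/setP => v; rewrite !inE; apply/negP => /andP[h1 h2]; exact: H h1 h2.
Qed.

Lemma TD_of_RD (T : finType) (e : rel T) (chi : T -> bool) (D1 D2 : {set T}) :
  symmetric e -> (forall v, exists w, e v w) -> (forall u v, e u v -> chi v = ~~ chi u) ->
  minimal_RD e chi D1 -> minimal_RD e chi D2 -> #|D1| != #|D2| -> mixed e.
Proof.
move=> esym nb coleq m1 m2 ne.
pose PE := fun E : {set T} => nbhdS e E == [set v | ~~ chi v].
have PC : PE [set v | chi v].
  apply/eqP/setP => v; rewrite inE; apply/nbhdSP/idP => [[w]|cv].
    by rewrite inE => cw ewv; rewrite (coleq w v ewv) cw.
  have [w evw] := nb v; exists w; last by rewrite esym.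
  by rewrite inE (coleq v w evw) (negbTE cv).
have [E mE sE] := minset_exists PC.
have Ered : forall w, w \in E -> chi w by move=> w /(subsetP sE); rewrite inE.
have Dblue : forall D, minimal_RD e chi D -> forall w, w \in D -> chi w = false.
  move=> D mD w wD; have [x ewx] := nb w.
  have : x \in nbhdS e D by apply/nbhdSP; exists w.
  rewrite (eqP (minsetp mD)) inE => cx.
  by move: (coleq w x ewx); rewrite cx; case: (chi w).
have key : forall D, minimal_RD e chi D -> minimal_TD e (D :|: E) /\ #|D :|: E| = #|D| + #|E|.
  move=> D mD; split; last first.
    by apply: cardU0 => v vD vE; move: (Dblue D mD v vD); rewrite Ered.
  have RD := eqP (minsetp mD); have PE' := eqP (minsetp mE).
  apply/minsetP; split.
    apply/eqP/setP => v; rewrite in_setT; apply/nbhdSP.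
    case cv: (chi v).
      have: v \in nbhdS e D by rewrite RD inE cv.
      by case/nbhdSP => w wD ewv; exists w; rewrite // inE wD.
    have: v \in nbhdS e E by rewrite PE' inE cv.
    by case/nbhdSP => w wE ewv; exists w; rewrite // inE wE orbT.
  move=> B TDB sB.
  have TB : forall v, exists2 w, w \in B & e w v.
    by move=> v; apply/nbhdSP; rewrite (eqP TDB) in_setT.
  have h1 : B :&: D = D.
    apply: (minsetinf mD); last exact: subsetIr.
    apply/eqP/setP => v; rewrite inE; apply/nbhdSP/idP => [[w]|cv].
      rewrite inE => /andP[_ wD] ewv; have: v \in nbhdS e D by apply/nbhdSP; exists w.
      by rewrite RD inE.
    have [w wB ewv] := TB v.
    have cw : chi w = false by move: (coleq w v ewv); rewrite cv; case: (chi w).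
    exists w => //; rewrite inE wB /=.
    by move: (subsetP sB w wB); rewrite inE => /orP[//|/Ered]; rewrite cw.
  have h2 : B :&: E = E.
    apply: (minsetinf mE); last exact: subsetIr.
    apply/eqP/setP => v; rewrite inE; apply/nbhdSP/idP => [[w]|cv].
      rewrite inE => /andP[_ wE] ewv; have: v \in nbhdS e E by apply/nbhdSP; exists w.
      by rewrite PE' inE.
    have [w wB ewv] := TB v.
    have cw : chi w by move: (coleq w v ewv); move: cv; case: (chi w); case: (chi v).
    exists w => //; rewrite inE wB /=.
    by move: (subsetP sB w wB); rewrite inE => /orP[/(Dblue D mD)|//]; rewrite cw.
  apply/eqP; rewrite eqEsubset sB /=; apply/subsetP => v; rewrite inE => /orP[vD|vE].
    by rewrite -h1 inE in vD; case/andP: vD.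
  by rewrite -h2 inE in vE; case/andP: vE.
have [t1 c1] := key D1 m1; have [t2 c2] := key D2 m2.
by exists (D1 :|: E), (D2 :|: E); split => //; rewrite c1 c2 eqn_add2r.
Qed.

Theorem theorem3p35 (T : finType) (e : rel T) (chi : T -> bool) :
  is_tree e ->
  balanced e ->
  proper_2coloring e chi ->
  (forall v, leaf e v -> chi v = false) ->
  (exists s, [/\ s \in Vk e 1, support_vertex e s
                & 2 <= #|nbhd e s :&: Vk e 2|]) ->
  (exists D1 D2, [/\ minimal_RD e chi D1, minimal_RD e chi D2 & #|D1| != #|D2|])
  /\ mixed e.
Proof.
move=> Htree Hbal Hcol Hleaf [s [s1 ssup s2]].
have Htree' := Htree.
case: Htree' => [[esym eirr] n0 conn cnt].
have neq : forall u v, e u v -> u != v.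
  by move=> u v euv; apply/eqP => E; move: euv; rewrite E eirr.
have coleq : forall u v, e u v -> chi v = ~~ chi u.
  by move=> u v /Hcol; case: (chi u); case: (chi v).
case/existsP: ssup => l /andP[ll esl].
have chis : chi s by rewrite (coleq l s) ?Hleaf // esym.
case/card_gt1P: s2 => a [b [aN bN ab]].
move: aN bN; rewrite /nbhd /Vk !inE => /andP[esa ha] /andP[esb hb].
have nla : ~~ leaf e a by apply/negP => /(height_leaf n0) h; rewrite h in ha.
have nlb : ~~ leaf e b by apply/negP => /(height_leaf n0) h; rewrite h in hb.
have nlred : forall r, chi r -> ~~ leaf e r.
  by move=> r cr; apply/negP => /Hleaf; rewrite cr.
have nb : forall v, exists w, e v w.
  move=> v; case: (eqVneq v s) => [->|vs]; first by exists l.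
  case/connectP: (conn v s) => p pp lp; case: p pp lp => [|y p] /= pp lp.
    by rewrite lp eqxx in vs.
  by case/andP: pp => evy _; exists y.
have twonb : forall v, ~~ leaf e v -> exists x y, [/\ e v x, e v y & x != y].
  move=> v nlv; have: 1 < #|nbhd e v|.
    have [w evw] := nb v.
    have : 0 < #|nbhd e v| by apply/card_gt0P; exists w; rewrite /nbhd inE.
    by move: nlv; rewrite /leaf; case: #|nbhd e v| => [|[|k]].
  case/card_gt1P => x [y [xN yN xy]]; exists x, y; move: xN yN; rewrite /nbhd !inE => -> ->.
  by split.
have F1 : forall p q x y, p != q -> x != y -> e p x -> e p y -> e q x -> e q y -> False.
  move=> p q x y pq xy epx epy eqx eqy.
  have px := neq _ _ epx; have py := neq _ _ epy; have qx := neq _ _ eqx; have qy := neq _ _ eqy.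
  have := bridge Htree epx; apply/negP/negPn.
  apply: (connect_trans (y:=y)).
    by apply: connect1; rewrite /remEdge /= epy eqxx (eq_sym y x) (negbTE xy) (negbTE px) ?andbF.
  apply: (connect_trans (y:=q)).
    by apply: connect1; rewrite /remEdge /= esym eqy (eq_sym y p) (negbTE py) (eq_sym y x) (negbTE xy) ?andbF.
  by apply: connect1; rewrite /remEdge /= eqx (eq_sym q p) (negbTE pq) (negbTE qx) ?andbF.
have pick : forall r q, r != q -> chi r -> exists w, e r w && ~~ e q w.
  move=> r q rq cr; have [x [y [erx ery xy]]] := twonb r (nlred r cr).
  case eqx: (e q x); last by exists x; rewrite erx eqx.
  case eqy: (e q y); last by exists y; rewrite ery eqy.
  by case: (F1 r q x y rq xy erx ery eqx eqy).
pose es := [rel x y | e x y && (x != s) && (y != s)].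
pose reg := fun v => if connect es a v then 0 else if connect es b v then 1 else 2.
have regE : forall u w, e u w -> u != s -> w != s -> reg u = reg w.
  move=> u w euw us ws.
  have h : forall c, connect es c u = connect es c w.
    move=> c; apply/idP/idP => H; apply: (connect_trans H); apply: connect1;
      by rewrite /es /= us ws ?andbT ?euw ?(esym w u) ?euw.
  by rewrite /reg !h.
have reg_le : forall v, reg v <= 2 by move=> v; rewrite /reg; case: (connect es a v); case: (connect es b v).
have F2 : ~~ connect es a b.
  apply/negP => C.
  have eas : e a s by rewrite esym.
  have := bridge Htree eas; apply/negP/negPn.
  apply: (connect_trans (y:=b)).
    apply: (connect_sub _ C) => x y /andP[/andP[exy xs] ys]; apply: connect1.
    by rewrite /remEdge /= exy (negbTE xs) (negbTE ys) ?andbF.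
  apply: connect1; rewrite /remEdge /= esym esb (eq_sym b a) (negbTE ab).
  by rewrite (eq_sym b s) (negbTE (neq _ _ esb)).
pose Q := fun i => [set r | chi r & (reg r == i) && (r != s)].
pose piece := fun i (D : {set T}) => [/\ D \subset [set w | ~~ chi w & reg w == i],
   (forall r, r \in Q i -> exists2 w, w \in D & e w r) &
   (forall v, v \in D -> exists2 r, r \in Q i &
        (e v r /\ forall w, w \in D -> e w r -> w = v))].
have mkpiece : forall i (W : {set T}), W \subset [set w | ~~ chi w & reg w == i] ->
   (forall r, r \in Q i -> exists2 w, w \in W & e w r) ->
   exists2 D, piece i D & D \subset W.
  move=> i W sW covW; have [D [sDW c p]] := cover_min covW.
  by exists D => //; split => //; apply: subset_trans sW.
have cov0 : forall i, exists2 D, piece i D & (forall w, w \in D -> ~~ e s w).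
  move=> i.
  pose W := [set w | ~~ chi w & (reg w == i) && ~~ e s w].
  have sW : W \subset [set w | ~~ chi w & reg w == i].
    by apply/subsetP => w; rewrite !inE => /andP[-> /andP[-> _]].
  have cW : forall r, r \in Q i -> exists2 w, w \in W & e w r.
    move=> r; rewrite inE => /andP[cr /andP[/eqP ri rs]].
    have [w /andP[erw nesw]] := pick r s rs cr.
    have cw : chi w = false by rewrite (coleq r w erw) cr.
    have ws : w != s by apply/eqP => E; rewrite E chis in cw.
    exists w; last by rewrite esym.
    by rewrite inE cw -(regE r w erw rs ws) ri eqxx nesw.
  have [D pD sD] := mkpiece i W sW cW.
  by exists D => // w /(subsetP sD); rewrite inE => /andP[_ /andP[_ ->]].
have covA : forall c rc i, reg c = i -> chi c = false -> e c rc -> rc != s -> c != s ->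
   exists2 D, piece i D & c \in D.
  move=> c rc i rci cc ecr rcs cs.
  pose W := [set w | ~~ chi w & (reg w == i) && ((w == c) || ~~ e rc w)].
  have sW : W \subset [set w | ~~ chi w & reg w == i].
    by apply/subsetP => w; rewrite !inE => /andP[-> /andP[-> _]].
  have crc : chi rc by rewrite (coleq c rc ecr) cc.
  have regrc : reg rc = i by rewrite -(regE c rc ecr cs rcs).
  have cW : forall r, r \in Q i -> exists2 w, w \in W & e w r.
    move=> r; rewrite inE => /andP[cr /andP[/eqP ri rs]].
    case: (eqVneq r rc) => [->|rrc].
      by exists c; last by []; rewrite inE cc rci eqxx /= eqxx.
    have [w /andP[erw nerw]] := pick r rc rrc cr.
    have cw : chi w = false by rewrite (coleq r w erw) cr.
    have ws : w != s by apply/eqP => E; rewrite E chis in cw.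
    exists w; last by rewrite esym.
    by rewrite inE cw -(regE r w erw rs ws) ri eqxx nerw orbT.
  have [D pD sDW] := mkpiece i W sW cW.
  exists D => //.
  case: pD => _ cv _.
  have rcQ : rc \in Q i by rewrite inE crc regrc eqxx rcs.
  have [w wD ewrc] := cv rc rcQ.
  move: (subsetP sDW w wD); rewrite inE => /andP[_ /andP[_ /orP[/eqP wc|]]].
    by rewrite -wc.
  by rewrite esym ewrc.
have lnb : forall r, e l r -> r = s.
  move=> r elr; case/cards1P: ll => x Nx.
  have : s \in nbhd e l by rewrite /nbhd inE esym.
  have : r \in nbhd e l by rewrite /nbhd inE.
  by rewrite Nx !inE => /eqP -> /eqP ->.
have chil : chi l = false by apply: Hleaf.
have pieceblue : forall i Di, piece i Di -> forall w, w \in Di -> chi w = false /\ reg w = i.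
  move=> i Di [sD _ _] w /(subsetP sD); rewrite inE => /andP[/negbTE -> /eqP ->].
  by [].
have other : forall i j Di Dj r w, piece i Di -> piece j Dj -> r \in Q i -> w \in Dj ->
    e w r -> i = j.
  move=> i j Di Dj r w pi pj; rewrite inE => /andP[_ /andP[/eqP ri rs]] wD ewr.
  have [cw rw] := pieceblue _ _ pj w wD.
  have ws : w != s by apply/eqP => E; rewrite E chis in cw.
  by rewrite -ri -rw (regE w r ewr ws rs).
have dispiece : forall i j Di Dj v, piece i Di -> piece j Dj -> v \in Di -> v \in Dj -> i = j.
  move=> i j Di Dj v pi pj vi vj; have [_ ri] := pieceblue _ _ pi v vi.
  by have [_ rj] := pieceblue _ _ pj v vj; rewrite -ri -rj.
have glue : forall (X D0 D1 D2 : {set T}), piece 0 D0 -> piece 1 D1 -> piece 2 D2 ->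
   X \subset [set l] ->
   (exists2 w, w \in X :|: D0 :|: D1 :|: D2 & e w s) ->
   (forall x, x \in X -> forall w, w \in X :|: D0 :|: D1 :|: D2 -> e w s -> w = x) ->
   minimal_RD e chi (X :|: D0 :|: D1 :|: D2) /\
   #|X :|: D0 :|: D1 :|: D2| = #|X| + #|D0| + #|D1| + #|D2|.
  move=> X D0 D1 D2 p0 p1 p2 sX covs uniqs.
  have Xl : forall w, w \in X -> w = l by move=> w /(subsetP sX); rewrite inE => /eqP.
  have inD : forall w, w \in X :|: D0 :|: D1 :|: D2 ->
      [\/ w \in X, w \in D0, w \in D1 | w \in D2].
    by move=> w; rewrite !inE -!orbA => /or4P.
  have Xnot : forall i r w, r \in Q i -> w \in X -> e w r -> False.
    move=> i r w; rewrite inE => /andP[_ /andP[_ rs]] /Xl -> /lnb E.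
    by rewrite E eqxx in rs.
  have disX : forall i Di v, piece i Di -> v \in X -> v \in Di -> False.
    move=> i Di v [_ _ pr] vX vD; have [r rQ [evr _]] := pr v vD.
    exact: Xnot i r v rQ vX evr.
  split; last first.
    rewrite !cardU0 //.
    - by move=> v vX v0; apply: (disX 0 D0 v p0).
    - move=> v; rewrite inE => /orP[vX|v0] v1; first by apply: (disX 1 D1 v p1).
      by have := dispiece _ _ _ _ v p0 p1 v0 v1.
    - move=> v; rewrite !inE => /orP[/orP[vX|v0]|v1] v2; first by apply: (disX 2 D2 v p2).
        by have := dispiece _ _ _ _ v p0 p2 v0 v2.
      by have := dispiece _ _ _ _ v p1 p2 v1 v2.
  set D := X :|: D0 :|: D1 :|: D2.
  have Dblue : forall w, w \in D -> chi w = false.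
    move=> w /inD [/Xl -> //| /(pieceblue _ _ p0) [] | /(pieceblue _ _ p1) [] | /(pieceblue _ _ p2) []] //.
  have priv : forall v, v \in D ->
      exists r, [/\ chi r, e v r & forall w, w \in D -> e w r -> w = v].
    move=> v /inD [vX | vD | vD | vD].
    - exists s; split => //; first by rewrite (Xl v vX) esym.
      by move=> w wD ews; exact: uniqs v vX w wD ews.
    - have [_ _ pr] := p0; have [r rQ [evr u]] := pr v vD.
      exists r; split => //; first by move: rQ; rewrite inE => /andP[].
      move=> w /inD [wX|wD|wD|wD] ewr.
      + by case: (Xnot _ _ _ rQ wX ewr).
      + exact: u.
      + by have := other _ _ _ _ _ _ p0 p1 rQ wD ewr.
      + by have := other _ _ _ _ _ _ p0 p2 rQ wD ewr.
    - have [_ _ pr] := p1; have [r rQ [evr u]] := pr v vD.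
      exists r; split => //; first by move: rQ; rewrite inE => /andP[].
      move=> w /inD [wX|wD|wD|wD] ewr.
      + by case: (Xnot _ _ _ rQ wX ewr).
      + by have := other _ _ _ _ _ _ p1 p0 rQ wD ewr.
      + exact: u.
      + by have := other _ _ _ _ _ _ p1 p2 rQ wD ewr.
    - have [_ _ pr] := p2; have [r rQ [evr u]] := pr v vD.
      exists r; split => //; first by move: rQ; rewrite inE => /andP[].
      move=> w /inD [wX|wD|wD|wD] ewr.
      + by case: (Xnot _ _ _ rQ wX ewr).
      + by have := other _ _ _ _ _ _ p2 p0 rQ wD ewr.
      + by have := other _ _ _ _ _ _ p2 p1 rQ wD ewr.
      + exact: u.
  have RD : is_RD e chi D.
    apply/eqP/setP => v; rewrite inE; apply/nbhdSP/idP => [[w wD ewv]|cv].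
      by rewrite (coleq w v ewv) Dblue.
    case: (eqVneq v s) => [->|vs]; first exact: covs.
    have vQ : v \in Q (reg v) by rewrite inE cv eqxx vs.
    move: vQ; have := reg_le v; case: (reg v) => [|[|[|k]]] // _ vQ.
    - have [_ c _] := p0; have [w wD ewv] := c v vQ.
      by exists w => //; rewrite /D !inE wD ?orbT.
    - have [_ c _] := p1; have [w wD ewv] := c v vQ.
      by exists w => //; rewrite /D !inE wD ?orbT.
    - have [_ c _] := p2; have [w wD ewv] := c v vQ.
      by exists w => //; rewrite /D !inE wD ?orbT.
  apply/minsetP; split => // B RDB sBD.
  apply/eqP; rewrite eqEsubset sBD /=; apply/subsetP => v vD.
  have [r [cr evr u]] := priv v vD.
  have : r \in nbhdS e B by rewrite (eqP RDB) inE.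
  case/nbhdSP => w wB ewr.
  by rewrite -(u w (subsetP sBD w wB) ewr).
have chia : chi a = false by rewrite (coleq s a esa) chis.
have chib : chi b = false by rewrite (coleq s b esb) chis.
have as_ : a != s by rewrite eq_sym (neq _ _ esa).
have bs : b != s by rewrite eq_sym (neq _ _ esb).
have rega : reg a = 0 by rewrite /reg connect0.
have regb : reg b = 1 by rewrite /reg (negbTE F2) connect0.
have [ra [eara ras]] : exists ra, e a ra /\ ra != s.
  have [x [y [eax eay xy]]] := twonb a nla.
  case: (eqVneq x s) => [xs|xs]; last by exists x.
  by exists y; split => //; rewrite -xs eq_sym.
have [rb [ebrb rbs]] : exists rb, e b rb /\ rb != s.
  have [x [y [ebx eby xy]]] := twonb b nlb.
  case: (eqVneq x s) => [xs|xs]; last by exists x.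
  by exists y; split => //; rewrite -xs eq_sym.
have [A0 pA0 nA0] := cov0 0.
have [B0 pB0 nB0] := cov0 1.
have [C pC nC] := cov0 2.
have [A pA aA] := covA a ra 0 rega chia eara ras as_.
have [B pB bB] := covA b rb 1 regb chib ebrb rbs bs.
have eas : e a s by rewrite esym.
have ebs : e b s by rewrite esym.
have nouniq : forall (D0 D1 D2 : {set T}), forall x, x \in (set0 : {set T}) ->
    forall w, w \in set0 :|: D0 :|: D1 :|: D2 -> e w s -> w = x.
  by move=> D0 D1 D2 x; rewrite inE.
have cv1 : exists2 w, w \in set0 :|: A :|: B0 :|: C & e w s.
  exists a; last exact: eas.
  by rewrite !inE aA !orbT.
have cv2 : exists2 w, w \in set0 :|: A :|: B :|: C & e w s.
  exists a; last exact: eas.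
  by rewrite !inE aA !orbT.
have cv5 : exists2 w, w \in set0 :|: A0 :|: B :|: C & e w s.
  exists b; last exact: ebs.
  by rewrite !inE bB !orbT.
have cv4 : exists2 w, w \in [set l] :|: A0 :|: B0 :|: C & e w s.
  exists l; last by rewrite esym.
  by rewrite !inE eqxx.
have [m1 c1] := glue set0 A B0 C pA pB0 pC (sub0set _) cv1 (nouniq _ _ _).
have [m2 c2] := glue set0 A B C pA pB pC (sub0set _) cv2 (nouniq _ _ _).
have [m5 c5] := glue set0 A0 B C pA0 pB pC (sub0set _) cv5 (nouniq _ _ _).
have u4 : forall x, x \in [set l] ->
    forall w, w \in [set l] :|: A0 :|: B0 :|: C -> e w s -> w = x.
  move=> x; rewrite inE => /eqP -> w; rewrite !inE -!orbA => /or4P[/eqP //|wD|wD|wD] ews.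
  - by move: (nA0 w wD); rewrite esym ews.
  - by move: (nB0 w wD); rewrite esym ews.
  - by move: (nC w wD); rewrite esym ews.
have [m4 c4] := glue [set l] A0 B0 C pA0 pB0 pC (subxx _) cv4 u4.
have main : exists D1 D2, [/\ minimal_RD e chi D1, minimal_RD e chi D2 & #|D1| != #|D2|].
  case: (eqVneq #|set0 :|: A :|: B0 :|: C| #|set0 :|: A :|: B :|: C|) => [E12|N12].
    exists ([set l] :|: A0 :|: B0 :|: C), (set0 :|: A0 :|: B :|: C); split; [exact: m4|exact: m5|].
    move: E12; rewrite c1 c2 c4 c5 cards0 cards1 => E12; apply/eqP => E45.
    move: E12 E45; clear; lia.
  exists (set0 :|: A :|: B0 :|: C), (set0 :|: A :|: B :|: C); split; [exact: m1|exact: m2|exact: N12].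
split; first exact: main.
case: main => D1 [D2 [mD1 mD2 ne]].
exact: (TD_of_RD esym nb coleq mD1 mD2 ne).
Qed.
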